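(* In the CCV $\lambda\mu$-calculus, the reduction relation consisting only of vertical reductions $\mu k.[k]M\to M$ (with $k$ not free in $M$) is strongly normalizing and confluent.
   Context: CCV $\lambda\mu$-calculus. Ordinary variables $x,y,\dots$ and continuation variables $k,l,\dots$ are disjoint. Terms $M ::= x \mid \lambda x.M \mid MM \mid (M\ \mathsf{where}\ x:=M) \mid \mu k.J$, jumps $J ::= [k]M \mid (J\ \mathsf{where}\ x:=M)$, where $(L\ \mathsf{where}\ x:=M)$ means $\mathsf{let}\ x=M\ \mathsf{in}\ L$ ($x$ bound in $L$ only); terms are identified up to $\alpha$-conversion and the congruence generated by (E1) $(L\ \mathsf{where}\ x:=(M\ \mathsf{where}\ y:=N))=((L\ \mathsf{where}\ x:=M)\ \mathsf{where}\ y:=N)$ if $y$ not free in $L$; (E2) $((\mu k.J)\ \mathsf{where}\ x:=M)=\mu k.(J\ \mathsf{where}\ x:=M)$ if $k$ not free in $M$; (E3) $[k](L\ \mathsf{where}\ x:=M)=([k]L\ \mathsf{where}\ x:=M)$. A vertical reduction is the contraction of a subterm $\mu k.[k]M$ with $k$ not free in $M$ to $M$, anywhere inside a term or jump. *)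

(* Defs.v *)
(* CCV lambda-mu-calculus with de Bruijn indices.
   Ordinary variables and continuation variables live in two separate
   de Bruijn index spaces, so alpha-conversion is built in. *)
From Stdlib Require Import Arith Relations.

Inductive term : Type :=
| Var (n : nat)
| Lam (t : term)
| App (t u : term)
| Where (l m : term)             (* (l where x := m), x = var 0 bound in l only *)
| Mu (j : jump)                  (* mu k. j (binds continuation var 0) *)
with jump : Type :=
| Jmp (k : nat) (t : term)
| JWhere (j : jump) (m : term).  (* (j where x := m), x = var 0 bound in j only *)

Fixpoint shv_t (c : nat) (t : term) : term :=
  match t with
  | Var n => Var (if c <=? n then S n else n)
  | Lam t => Lam (shv_t (S c) t)
  | App t u => App (shv_t c t) (shv_t c u)
  | Where l m => Where (shv_t (S c) l) (shv_t c m)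
  | Mu j => Mu (shv_j c j)
  end
with shv_j (c : nat) (j : jump) : jump :=
  match j with
  | Jmp k t => Jmp k (shv_t c t)
  | JWhere j m => JWhere (shv_j (S c) j) (shv_t c m)
  end.

Fixpoint shc_t (c : nat) (t : term) : term :=
  match t with
  | Var n => Var n
  | Lam t => Lam (shc_t c t)
  | App t u => App (shc_t c t) (shc_t c u)
  | Where l m => Where (shc_t c l) (shc_t c m)
  | Mu j => Mu (shc_j (S c) j)
  end
with shc_j (c : nat) (j : jump) : jump :=
  match j with
  | Jmp k t => Jmp (if c <=? k then S k else k) (shc_t c t)
  | JWhere j m => JWhere (shc_j c j) (shc_t c m)
  end.

(* un-shift continuation variables > c by one (used when c does not occur) *)
Fixpoint unshc_t (c : nat) (t : term) : term :=
  match t with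
  | Var n => Var n
  | Lam t => Lam (unshc_t c t)
  | App t u => App (unshc_t c t) (unshc_t c u)
  | Where l m => Where (unshc_t c l) (unshc_t c m)
  | Mu j => Mu (unshc_j (S c) j)
  end
with unshc_j (c : nat) (j : jump) : jump :=
  match j with
  | Jmp k t => Jmp (if c <? k then pred k else k) (unshc_t c t)
  | JWhere j m => JWhere (unshc_j c j) (unshc_t c m)
  end.

Fixpoint cfree_t (c : nat) (t : term) : bool :=
  match t with
  | Var _ => false
  | Lam t => cfree_t c t
  | App t u => cfree_t c t || cfree_t c u
  | Where l m => cfree_t c l || cfree_t c m
  | Mu j => cfree_j (S c) j
  end
with cfree_j (c : nat) (j : jump) : bool :=
  match j with
  | Jmp k t => Nat.eqb k c || cfree_t c t
  | JWhere j m => cfree_j c j || cfree_t c m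
  end.

Inductive ceq1_t : term -> term -> Prop :=
| E1_t (L M N : term) :
    (* (L where x := (M where y := N)) = ((L where x := M) where y := N) *)
    ceq1_t (Where L (Where M N)) (Where (Where (shv_t 1 L) M) N)
| E2 (J : jump) (M : term) :
    (* ((mu k. J) where x := M) = mu k. (J where x := M), k not free in M *)
    ceq1_t (Where (Mu J) M) (Mu (JWhere J (shc_t 0 M)))
| c1_lam t t' : ceq1_t t t' -> ceq1_t (Lam t) (Lam t')
| c1_appl t t' u : ceq1_t t t' -> ceq1_t (App t u) (App t' u)
| c1_appr t u u' : ceq1_t u u' -> ceq1_t (App t u) (App t u')
| c1_wherel l l' m : ceq1_t l l' -> ceq1_t (Where l m) (Where l' m)
| c1_wherer l m m' : ceq1_t m m' -> ceq1_t (Where l m) (Where l m')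
| c1_mu j j' : ceq1_j j j' -> ceq1_t (Mu j) (Mu j')
with ceq1_j : jump -> jump -> Prop :=
| E1_j (J : jump) (M N : term) :
    ceq1_j (JWhere J (Where M N)) (JWhere (JWhere (shv_j 1 J) M) N)
| E3 (k : nat) (L M : term) :
    ceq1_j (Jmp k (Where L M)) (JWhere (Jmp k L) M)
| c1_jmp k t t' : ceq1_t t t' -> ceq1_j (Jmp k t) (Jmp k t')
| c1_jwherel j j' m : ceq1_j j j' -> ceq1_j (JWhere j m) (JWhere j' m)
| c1_jwherer j m m' : ceq1_t m m' -> ceq1_j (JWhere j m) (JWhere j m').

Definition ceq_t : relation term := clos_refl_sym_trans term ceq1_t.

Inductive vstep_t : term -> term -> Prop :=
| v_redex (M : term) :
    cfree_t 0 M = false -> vstep_t (Mu (Jmp 0 M)) (unshc_t 0 M)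
| v_lam t t' : vstep_t t t' -> vstep_t (Lam t) (Lam t')
| v_appl t t' u : vstep_t t t' -> vstep_t (App t u) (App t' u)
| v_appr t u u' : vstep_t u u' -> vstep_t (App t u) (App t u')
| v_wherel l l' m : vstep_t l l' -> vstep_t (Where l m) (Where l' m)
| v_wherer l m m' : vstep_t m m' -> vstep_t (Where l m) (Where l m')
| v_mu j j' : vstep_j j j' -> vstep_t (Mu j) (Mu j')
with vstep_j : jump -> jump -> Prop :=
| v_jmp k t t' : vstep_t t t' -> vstep_j (Jmp k t) (Jmp k t')
| v_jwherel j j' m : vstep_j j j' -> vstep_j (JWhere j m) (JWhere j' m)
| v_jwherer j m m' : vstep_t m m' -> vstep_j (JWhere j m) (JWhere j m').

Definition vred (M N : term) : Prop :=
  exists M' N', ceq_t M M' /\ vstep_t M' N' /\ ceq_t N' N.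

Definition vred_star : relation term := clos_refl_trans term vred.

Definition vred_SN : Prop := forall M : term, Acc (fun N M => vred M N) M.

Definition vred_confluent : Prop :=
  forall M N1 N2, vred_star M N1 -> vred_star M N2 ->
    exists P1 P2, vred_star N1 P1 /\ vred_star N2 P2 /\ ceq_t P1 P2.

(* Main.v *)
Require Import Defs.
From Stdlib Require Import Relations Arith Lia Bool.

Scheme term_ind2 := Induction for term Sort Prop
with jump_ind2 := Induction for jump Sort Prop.
Combined Scheme tj_ind from term_ind2, jump_ind2.

Ltac split_orb := repeat match goal with
  | H : _ || _ = false |- _ => apply orb_false_iff in H as [? ?] end.
Ltac idx := repeat match goal with
  | |- context[?a <=? ?b] => destruct (Nat.leb_spec a b)
  | |- context[?a <? ?b] => destruct (Nat.ltb_spec a b)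
  | |- context[?a =? ?b] => destruct (Nat.eqb_spec a b)
  | H : context[?a =? ?b] |- _ => destruct (Nat.eqb_spec a b)
  | |- context[match ?k with 0 => _ | S _ => _ end] => destruct k
  end; try lia.
Ltac useIH := match goal with H : forall _, _ |- _ => apply H end.
Ltac shs := intros; simpl in *; split_orb; f_equal; try (solve [repeat (useIH || lia || eauto)]); idx; try (f_equal; lia).

Lemma S1 : (forall t c, unshc_t c (shc_t c t) = t) /\ (forall j c, unshc_j c (shc_j c j) = j).
Proof. apply tj_ind; shs. Qed.

Lemma S2 : (forall t c, cfree_t c t = false -> shc_t c (unshc_t c t) = t) /\
           (forall j c, cfree_j c j = false -> shc_j c (unshc_j c j) = j).
Proof. apply tj_ind; shs. Qed.

Lemma S3 : (forall t c, cfree_t c (shc_t c t) = false) /\ (forall j c, cfree_j c (shc_j c j) = false).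
Proof. apply tj_ind; intros; simpl; rewrite ?H, ?H0; auto; idx. Qed.

Lemma S4 : (forall t c d, c <= d -> shc_t (S d) (shc_t c t) = shc_t c (shc_t d t)) /\
           (forall j c d, c <= d -> shc_j (S d) (shc_j c j) = shc_j c (shc_j d j)).
Proof. apply tj_ind; shs. Qed.

Lemma S5 : (forall t c d, shv_t c (shc_t d t) = shc_t d (shv_t c t)) /\
           (forall j c d, shv_j c (shc_j d j) = shc_j d (shv_j c j)).
Proof. apply tj_ind; shs. Qed.

Lemma S6 : (forall t c d, cfree_t d (shv_t c t) = cfree_t d t) /\
           (forall j c d, cfree_j d (shv_j c j) = cfree_j d j).
Proof. apply tj_ind; intros; simpl; rewrite ?H, ?H0; auto. Qed.

Lemma S7 : (forall t x c, x < c -> cfree_t x (shc_t c t) = cfree_t x t) /\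
           (forall j x c, x < c -> cfree_j x (shc_j c j) = cfree_j x j).
Proof. apply tj_ind; intros; simpl; rewrite ?H, ?H0; auto; try lia; idx; reflexivity. Qed.

Lemma S8 : (forall t c d, c <= d -> shv_t (S d) (shv_t c t) = shv_t c (shv_t d t)) /\
           (forall j c d, c <= d -> shv_j (S d) (shv_j c j) = shv_j c (shv_j d j)).
Proof. apply tj_ind; shs. Qed.

Lemma S9 : (forall t c d, unshc_t c (shv_t d t) = shv_t d (unshc_t c t)) /\
           (forall j c d, unshc_j c (shv_j d j) = shv_j d (unshc_j c j)).
Proof. apply tj_ind; shs. Qed.

Lemma S10 : (forall t c d, c <= d -> cfree_t c t = false -> unshc_t c (shc_t (S d) t) = shc_t d (unshc_t c t)) /\
           (forall j c d, c <= d -> cfree_j c j = false -> unshc_j c (shc_j (S d) j) = shc_j d (unshc_j c j)).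
Proof. apply tj_ind; shs. Qed.

Fixpoint mkW (l m : term) {struct m} : term :=
  match m with Where a b => mkW (mkW (shv_t 1 l) a) b | _ => Where l m end.
Fixpoint mkJW (j : jump) (m : term) {struct m} : jump :=
  match m with Where a b => mkJW (mkJW (shv_j 1 j) a) b | _ => JWhere j m end.
Fixpoint mkJmp (k : nat) (t : term) : jump :=
  match t with Where a b => mkJW (mkJmp k a) b | _ => Jmp k t end.
Fixpoint mkMu (j : jump) : term :=
  match j with
  | JWhere j' m => if cfree_t 0 m then Mu j else mkW (mkMu j') (unshc_t 0 m)
  | Jmp k t => if (k =? 0) && negb (cfree_t 0 t) then unshc_t 0 t else Mu j
  end.
Fixpoint G (t : term) : term :=
  match t with
  | Var n => Var n
  | Lam t => Lam (G t)
  | App t u => App (G t) (G u)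
  | Where l m => mkW (G l) (G m)
  | Mu j => mkMu (Gj j)
  end
with Gj (j : jump) : jump :=
  match j with
  | Jmp k t => mkJmp k (G t)
  | JWhere j m => mkJW (Gj j) (G m)
  end.

Definition isW (t : term) : bool := match t with Where _ _ => true | _ => false end.

Lemma mkW_nW l m : isW m = false -> mkW l m = Where l m.
Proof. destruct m; simpl; congruence. Qed.
Lemma mkJW_nW j m : isW m = false -> mkJW j m = JWhere j m.
Proof. destruct m; simpl; congruence. Qed.
Lemma mkJmp_nW k m : isW m = false -> mkJmp k m = Jmp k m.
Proof. destruct m; simpl; congruence. Qed.
Lemma isW_shv c t : isW (shv_t c t) = isW t. Proof. destruct t; reflexivity. Qed.
Lemma isW_shc c t : isW (shc_t c t) = isW t. Proof. destruct t; reflexivity. Qed.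
Lemma isW_unshc c t : isW (unshc_t c t) = isW t. Proof. destruct t; reflexivity. Qed.

Ltac baseW := match goal with |- context [?f ?x ?m] =>
  lazymatch m with
  | Where _ _ => fail
  | _ => first [ rewrite (mkW_nW x m) by reflexivity
               | rewrite (mkJW_nW x m) by reflexivity ] end end.

Lemma shv_mkW : forall m l c, shv_t c (mkW l m) = mkW (shv_t (S c) l) (shv_t c m).
Proof.
  induction m; intros; try reflexivity.
  simpl. rewrite IHm2, IHm1. f_equal. f_equal. rewrite (proj1 S8); auto; lia.
Qed.
Lemma shv_mkJW : forall m j c, shv_j c (mkJW j m) = mkJW (shv_j (S c) j) (shv_t c m).
Proof.
  induction m; intros; try reflexivity.
  simpl. rewrite IHm2, IHm1. f_equal. f_equal. rewrite (proj2 S8); auto; lia.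
Qed.
Lemma shc_mkW : forall m l c, shc_t c (mkW l m) = mkW (shc_t c l) (shc_t c m).
Proof.
  induction m; intros; try reflexivity.
  simpl. rewrite IHm2, IHm1. f_equal. f_equal. rewrite (proj1 S5); auto.
Qed.
Lemma shc_mkJW : forall m j c, shc_j c (mkJW j m) = mkJW (shc_j c j) (shc_t c m).
Proof.
  induction m; intros; try reflexivity.
  simpl. rewrite IHm2, IHm1. f_equal. f_equal. rewrite (proj2 S5); auto.
Qed.
Lemma shv_mkJmp : forall t k c, shv_j c (mkJmp k t) = mkJmp k (shv_t c t).
Proof.
  induction t; intros; try reflexivity.
  simpl. rewrite shv_mkJW, IHt1. reflexivity.
Qed.
Lemma shc_mkJmp : forall t k c, shc_j c (mkJmp k t) = mkJmp (if c <=? k then S k else k) (shc_t c t).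
Proof.
  induction t; intros; try reflexivity.
  simpl. rewrite shc_mkJW, IHt1. reflexivity.
Qed.
Lemma shv_mkMu : forall j c, shv_t c (mkMu j) = mkMu (shv_j c j).
Proof.
  induction j; intros; simpl; rewrite (proj1 S6).
  - destruct (_ && _); [symmetry; apply (proj1 S9) | reflexivity].
  - destruct (cfree_t 0 _) eqn:E; [reflexivity|].
    rewrite shv_mkW, IHj, (proj1 S9). reflexivity.
Qed.
Lemma shc_mkMu : forall j c, shc_t c (mkMu j) = mkMu (shc_j (S c) j).
Proof.
  induction j; intros; simpl.
  - destruct k; simpl.
    + rewrite (proj1 S7) by lia. destruct (cfree_t 0 t) eqn:E; simpl; [reflexivity|].
      rewrite (proj1 S10); auto; lia.
    + destruct (c <=? k); reflexivity.
  - rewrite (proj1 S7) by lia. destruct (cfree_t 0 _) eqn:E; [reflexivity|].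
    rewrite shc_mkW, IHj, (proj1 S10); auto; lia.
Qed.

Lemma mkW_assoc : forall c a b, mkW a (mkW b c) = mkW (mkW (shv_t 1 a) b) c.
Proof.
  induction c; intros; try reflexivity.
  simpl. rewrite IHc2, IHc1, shv_mkW, (proj1 S8 a 1 1) by lia. reflexivity.
Qed.
Lemma mkJW_assoc : forall c j b, mkJW j (mkW b c) = mkJW (mkJW (shv_j 1 j) b) c.
Proof.
  induction c; intros; try reflexivity.
  simpl. rewrite IHc2, IHc1, shv_mkJW, (proj2 S8 j 1 1) by lia. reflexivity.
Qed.
Lemma mkJmp_mkW : forall b a k, mkJmp k (mkW a b) = mkJW (mkJmp k a) b.
Proof.
  induction b; intros; try reflexivity.
  simpl. rewrite IHb2, IHb1, shv_mkJmp. reflexivity.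
Qed.
Lemma mkMu_E2 : forall m j, mkMu (mkJW j (shc_t 0 m)) = mkW (mkMu j) m.
Proof.
  induction m; intros;
  try (rewrite mkJW_nW by (rewrite isW_shc; reflexivity); cbn [mkMu];
       rewrite (proj1 S3), (proj1 S1); reflexivity).
  simpl. rewrite IHm2, IHm1, shv_mkMu. reflexivity.
Qed.

Lemma G_shv : (forall t c, G (shv_t c t) = shv_t c (G t)) /\ (forall j c, Gj (shv_j c j) = shv_j c (Gj j)).
Proof.
  apply tj_ind; intros; simpl; rewrite ?H, ?H0; try reflexivity.
  - rewrite shv_mkW; reflexivity.
  - rewrite shv_mkMu; reflexivity.
  - rewrite shv_mkJmp; reflexivity.
  - rewrite shv_mkJW; reflexivity.
Qed.
Lemma G_shc : (forall t c, G (shc_t c t) = shc_t c (G t)) /\ (forall j c, Gj (shc_j c j) = shc_j c (Gj j)).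
Proof.
  apply tj_ind; intros; simpl; rewrite ?H, ?H0; try reflexivity.
  - rewrite shc_mkW; reflexivity.
  - rewrite shc_mkMu; reflexivity.
  - rewrite shc_mkJmp; reflexivity.
  - rewrite shc_mkJW; reflexivity.
Qed.

Fixpoint wn (t : term) : bool := match t with Where a b => wn a && negb (isW b) | _ => true end.
Fixpoint jn (j : jump) : bool := match j with Jmp _ t => negb (isW t) | JWhere j _ => jn j end.

Lemma wn_shv : forall t c, wn (shv_t c t) = wn t.
Proof. induction t; intros; simpl; rewrite ?IHt1, ?isW_shv; auto. Qed.
Lemma jn_shv : forall j c, jn (shv_j c j) = jn j.
Proof. induction j; intros; simpl; rewrite ?IHj, ?isW_shv; auto. Qed.
Lemma wn_mkW : forall m l, wn l = true -> wn (mkW l m) = true.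
Proof.
  induction m; intros; simpl; rewrite ?H; auto.
  apply IHm2, IHm1. rewrite wn_shv; auto.
Qed.
Lemma jn_mkJW : forall m j, jn j = true -> jn (mkJW j m) = true.
Proof.
  induction m; intros; simpl; rewrite ?H; auto.
  apply IHm2, IHm1. rewrite jn_shv; auto.
Qed.
Lemma jn_mkJmp : forall t k, jn (mkJmp k t) = true.
Proof. induction t; intros; simpl; auto. apply jn_mkJW; auto. Qed.
Lemma wn_mkMu : forall j, jn j = true -> wn (mkMu j) = true.
Proof.
  induction j; intros; simpl in *.
  - destruct (_ && _); auto. destruct t; simpl in *; auto; discriminate.
  - destruct (cfree_t 0 _); auto. apply wn_mkW; auto.
Qed.
Lemma wn_G : (forall t, wn (G t) = true) /\ (forall j, jn (Gj j) = true).
Proof.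
  apply tj_ind; intros; simpl; auto.
  - apply wn_mkW; auto.
  - apply wn_mkMu; auto.
  - apply jn_mkJmp.
  - apply jn_mkJW; auto.
Qed.

Lemma redex_lemma : forall X, wn X = true -> cfree_t 0 X = false -> mkMu (mkJmp 0 X) = unshc_t 0 X.
Proof.
  induction X; intros Hw Hc;
  try (rewrite mkJmp_nW by reflexivity; simpl in *; rewrite ?Hc; reflexivity).
  simpl in *. apply andb_prop in Hw as [Hw1 Hw2]. apply orb_false_iff in Hc as [Hc1 Hc2].
  destruct (isW X2) eqn:E; [discriminate|].
  rewrite mkJW_nW by auto. simpl. rewrite Hc2, IHX1 by auto.
  rewrite mkW_nW; auto. rewrite isW_unshc; auto.
Qed.

Scheme ceq1_t_ind2 := Induction for ceq1_t Sort Prop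
with ceq1_j_ind2 := Induction for ceq1_j Sort Prop.
Combined Scheme ceq1_ind from ceq1_t_ind2, ceq1_j_ind2.
Scheme vstep_t_ind2 := Induction for vstep_t Sort Prop
with vstep_j_ind2 := Induction for vstep_j Sort Prop.
Combined Scheme vstep_ind from vstep_t_ind2, vstep_j_ind2.

Lemma G_ceq1 : (forall t u, ceq1_t t u -> G t = G u) /\ (forall j k, ceq1_j j k -> Gj j = Gj k).
Proof.
  apply ceq1_ind; intros; simpl; try congruence.
  - rewrite (proj1 G_shv), mkW_assoc. reflexivity.
  - rewrite (proj1 G_shc), mkMu_E2. reflexivity.
  - rewrite (proj2 G_shv), mkJW_assoc. reflexivity.
  - apply mkJmp_mkW.
Qed.

Lemma G_ceq : forall t u, ceq_t t u -> G t = G u.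
Proof. intros t u H; induction H; try congruence. apply (proj1 G_ceq1); auto. Qed.

Lemma G_vstep : (forall t u, vstep_t t u -> G t = G u) /\ (forall j k, vstep_j j k -> Gj j = Gj k).
Proof.
  apply vstep_ind; intros; simpl; try congruence.
  pose proof ((proj1 S2) M 0 e) as HM.
  set (M0 := unshc_t 0 M) in *.
  rewrite <- HM, (proj1 G_shc).
  rewrite redex_lemma.
  - rewrite (proj1 S1). reflexivity.
  - rewrite <- (proj1 G_shc). apply (proj1 wn_G).
  - apply (proj1 S3).
Qed.

Definition Et (a b : term) : Prop := vstep_t a b \/ ceq1_t a b \/ ceq1_t b a.
Definition Ej (a b : jump) : Prop := vstep_j a b \/ ceq1_j a b \/ ceq1_j b a.
Definition R := clos_refl_trans term Et.
Definition Rj := clos_refl_trans jump Ej.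

Lemma lift {A B} (RA : relation A) (RB : relation B) (f : A -> B) :
  (forall x y, RA x y -> clos_refl_trans B RB (f x) (f y)) ->
  forall x y, clos_refl_trans A RA x y -> clos_refl_trans B RB (f x) (f y).
Proof.
  intros H x y Hxy; induction Hxy; [apply H; auto | apply rt_refl | eapply rt_trans; eauto].
Qed.

Ltac liftE RA RB f := apply (lift RA RB f); [intros ? ? [?|[?|?]]; apply rt_step;
  [left | right; left | right; right]; constructor; assumption | assumption].

Lemma R_lam t t' : R t t' -> R (Lam t) (Lam t'). Proof. intro; liftE Et Et Lam. Qed.
Lemma R_appl t t' u : R t t' -> R (App t u) (App t' u). Proof. intro; liftE Et Et (fun x => App x u). Qed.
Lemma R_appr t u u' : R u u' -> R (App t u) (App t u'). Proof. intro; liftE Et Et (fun x => App t x). Qed.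
Lemma R_wl l l' m : R l l' -> R (Where l m) (Where l' m). Proof. intro; liftE Et Et (fun x => Where x m). Qed.
Lemma R_wr l m m' : R m m' -> R (Where l m) (Where l m'). Proof. intro; liftE Et Et (fun x => Where l x). Qed.
Lemma R_mu j j' : Rj j j' -> R (Mu j) (Mu j'). Proof. intro; liftE Ej Et Mu. Qed.
Lemma Rj_jmp k t t' : R t t' -> Rj (Jmp k t) (Jmp k t'). Proof. intro; liftE Et Ej (Jmp k). Qed.
Lemma Rj_wl j j' m : Rj j j' -> Rj (JWhere j m) (JWhere j' m). Proof. intro; liftE Ej Ej (fun x => JWhere x m). Qed.
Lemma Rj_wr j m m' : R m m' -> Rj (JWhere j m) (JWhere j m'). Proof. intro; liftE Et Ej (fun x => JWhere j x). Qed.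

Lemma R_mkW : forall m l, R (Where l m) (mkW l m).
Proof.
  induction m; intros; try (rewrite mkW_nW by reflexivity; apply rt_refl).
  simpl. eapply rt_trans; [apply rt_step; right; left; apply E1_t|].
  eapply rt_trans; [apply R_wl, IHm1 | apply IHm2].
Qed.
Lemma Rj_mkJW : forall m j, Rj (JWhere j m) (mkJW j m).
Proof.
  induction m; intros; try (rewrite mkJW_nW by reflexivity; apply rt_refl).
  simpl. eapply rt_trans; [apply rt_step; right; left; apply E1_j|].
  eapply rt_trans; [apply Rj_wl, IHm1 | apply IHm2].
Qed.
Lemma Rj_mkJmp : forall t k, Rj (Jmp k t) (mkJmp k t).
Proof.
  induction t; intros; try (rewrite mkJmp_nW by reflexivity; apply rt_refl).
  simpl. eapply rt_trans; [apply rt_step; right; left; apply E3|].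
  eapply rt_trans; [apply Rj_wl, IHt1 | apply Rj_mkJW].
Qed.
Lemma R_mkMu : forall j, R (Mu j) (mkMu j).
Proof.
  induction j as [k t|j IHj t]; simpl.
  - destruct (k =? 0) eqn:E1; destruct (cfree_t 0 t) eqn:E2; simpl; try apply rt_refl.
    apply Nat.eqb_eq in E1; subst. apply rt_step; left; constructor; auto.
  - destruct (cfree_t 0 t) eqn:E; [apply rt_refl|].
    apply rt_trans with (Where (Mu j) (unshc_t 0 t)).
    { apply rt_step; right; right. rewrite <- ((proj1 S2) t 0 E) at 2. apply E2. }
    eapply rt_trans; [apply R_wl, IHj | apply R_mkW].
Qed.

Lemma R_G : (forall t, R t (G t)) /\ (forall j, Rj j (Gj j)).
Proof.
  apply tj_ind; intros; simpl.
  - apply rt_refl.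
  - apply R_lam; auto.
  - eapply rt_trans; [apply R_appl, H | apply R_appr, H0].
  - eapply rt_trans; [apply R_wl, H|]. eapply rt_trans; [apply R_wr, H0|]. apply R_mkW.
  - eapply rt_trans; [apply R_mu, H|]. apply R_mkMu.
  - eapply rt_trans; [apply Rj_jmp, H|]. apply Rj_mkJmp.
  - eapply rt_trans; [apply Rj_wl, H|]. eapply rt_trans; [apply Rj_wr, H0|]. apply Rj_mkJW.
Qed.

Lemma vred_ceq_l x y z : ceq_t x y -> vred y z -> vred x z.
Proof.
  intros H [M' [N' [H1 [H2 H3]]]]. exists M', N'. split; [eapply rst_trans; eauto|]; auto.
Qed.

Lemma rt_split y P : vred_star y P -> y = P \/ exists w, vred y w /\ vred_star w P.
Proof.
  intro H. apply clos_rt_rt1n in H. inversion H; subst; [left; auto|right].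
  eexists; split; [eassumption | apply clos_rt1n_rt; eassumption].
Qed.

Lemma R_to : forall M P, R M P -> exists P', vred_star M P' /\ ceq_t P' P.
Proof.
  intros M P H. apply clos_rt_rt1n in H. induction H.
  - exists x. split; [apply rt_refl | apply rst_refl].
  - destruct IHclos_refl_trans_1n as [P' [HP1 HP2]].
    destruct H as [Hv|[Hc|Hc]].
    + exists P'. split; auto. eapply rt_trans; [apply rt_step|]; eauto.
      exists x, y. repeat split; auto; apply rst_refl.
    + assert (Hxy : ceq_t x y) by (apply rst_step; auto). clear Hc.
      destruct (rt_split _ _ HP1) as [<-|[w [Hyw Hw]]].
      * exists x. split; [apply rt_refl|]. eapply rst_trans; eauto.
      * exists P'. split; auto. eapply rt_trans; [apply rt_step, (vred_ceq_l x y w); auto|].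
        auto.
    + assert (Hxy : ceq_t x y) by (apply rst_sym, rst_step; auto). clear Hc.
      destruct (rt_split _ _ HP1) as [<-|[w [Hyw Hw]]].
      * exists x. split; [apply rt_refl|]. eapply rst_trans; eauto.
      * exists P'. split; auto. eapply rt_trans; [apply rt_step, (vred_ceq_l x y w); auto|].
        auto.
Qed.

Lemma G_vred M N : vred M N -> G M = G N.
Proof.
  intros [M' [N' [H1 [H2 H3]]]].
  rewrite (G_ceq _ _ H1), ((proj1 G_vstep) _ _ H2), (G_ceq _ _ H3). reflexivity.
Qed.
Lemma G_vred_star M N : vred_star M N -> G M = G N.
Proof. intro H; induction H; try congruence. apply G_vred; auto. Qed.

Fixpoint cnt (t : term) : nat :=
  match t with
  | Var _ => 0 | Lam t => cnt t | App t u => cnt t + cnt u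
  | Where l m => cnt l + cnt m | Mu j => S (cntj j)
  end
with cntj (j : jump) : nat :=
  match j with Jmp _ t => cnt t | JWhere j m => cntj j + cnt m end.

Lemma cnt_shv : (forall t c, cnt (shv_t c t) = cnt t) /\ (forall j c, cntj (shv_j c j) = cntj j).
Proof. apply tj_ind; intros; simpl; rewrite ?H, ?H0; auto. Qed.
Lemma cnt_shc : (forall t c, cnt (shc_t c t) = cnt t) /\ (forall j c, cntj (shc_j c j) = cntj j).
Proof. apply tj_ind; intros; simpl; rewrite ?H, ?H0; auto. Qed.
Lemma cnt_unshc : (forall t c, cnt (unshc_t c t) = cnt t) /\ (forall j c, cntj (unshc_j c j) = cntj j).
Proof. apply tj_ind; intros; simpl; rewrite ?H, ?H0; auto. Qed.
Lemma cnt_ceq1 : (forall t u, ceq1_t t u -> cnt t = cnt u) /\ (forall j k, ceq1_j j k -> cntj j = cntj k).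
Proof.
  apply ceq1_ind; intros; simpl; rewrite ?(proj1 cnt_shv), ?(proj2 cnt_shv), ?(proj1 cnt_shc); lia.
Qed.
Lemma cnt_ceq t u : ceq_t t u -> cnt t = cnt u.
Proof. intro H; induction H; try lia. apply (proj1 cnt_ceq1); auto. Qed.
Lemma cnt_vstep : (forall t u, vstep_t t u -> cnt u < cnt t) /\ (forall j k, vstep_j j k -> cntj k < cntj j).
Proof.
  apply vstep_ind; intros; simpl; rewrite ?(proj1 cnt_unshc); lia.
Qed.
Lemma cnt_vred M N : vred M N -> cnt N < cnt M.
Proof.
  intros [M' [N' [H1 [H2 H3]]]].
  rewrite (cnt_ceq _ _ H1), <- (cnt_ceq _ _ H3). apply (proj1 cnt_vstep); auto.
Qed.

Theorem lemma1p21 : vred_SN /\ vred_confluent.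
Proof.
  split.
  - intro M. assert (forall n M, cnt M < n -> Acc (fun N M => vred M N) M).
    { induction n; intros; [lia|]. constructor; intros y Hy. apply IHn.
      pose proof (cnt_vred _ _ Hy); lia. }
    apply (H (S (cnt M))); lia.
  - intros M N1 N2 H1 H2.
    destruct (R_to _ _ ((proj1 R_G) N1)) as [P1 [HP1 HQ1]].
    destruct (R_to _ _ ((proj1 R_G) N2)) as [P2 [HP2 HQ2]].
    exists P1, P2. repeat split; auto.
    rewrite <- (G_vred_star _ _ H1), (G_vred_star _ _ H2) in HQ1.
    eapply rst_trans; [apply HQ1 | apply rst_sym, HQ2].
Qed.
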